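(* Let $A = A_1 \oplus A_2 \in \mathbb{R}^{n\times n}$ be a block-diagonal direct sum, where $A_1$ and $A_2$ are irreducible nonnegative square matrices. For $t\in[0,1]$ let $r(t) := r\big((1-t)A + tA^{\top}\big)$, and for $k=1,2$ let $r_k(t) := r\big((1-t)A_k + tA_k^{\top}\big)$, where $r(\cdot)$ denotes spectral radius. Suppose there exists $t^*\in(0,1)$ such that (1) $r_1(t^* ) = r_2(t^* )$, and (2) $r_1'(t^* ) \neq r_2'(t^* )$. Then $r(t)$ is not concave in $t\in(0,1)$.
   Context: $r(M)$ denotes the spectral radius of a square matrix $M$. The direct sum $A_1\oplus A_2$ is the block-diagonal matrix with diagonal blocks $A_1, A_2$. *)

(* Defs.v *)
From HB Require Import structures.
From mathcomp Require Import all_boot all_order all_algebra.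
From mathcomp Require Import all_classical all_reals all_analysis.
From mathcomp Require Import complex.
Set Implicit Arguments. Unset Strict Implicit. Unset Printing Implicit Defensive.
Import Order.TTheory GRing.Theory Num.Theory.
Local Open Scope ring_scope.
Local Open Scope classical_set_scope.

Definition spectral_radius (R : realType) (n : nat) (M : 'M[R]_n) : R :=
  sup [set Normc.normc z | z in
        [set z : R[i] | root (map_poly (real_complex R) (char_poly M)) z]].

Definition nonneg_mx (R : realType) (n : nat) (A : 'M[R]_n) : Prop :=
  forall i j, 0 <= A i j.

(* Irreducible (nonnegative) matrix: for every pair of indices i, j there is
   a power k with (A^k)_{ij} > 0 (equivalently, the digraph of A is strongly
   connected; a 1x1 matrix is irreducible, via k = 0). *)
Definition irreducible_mx (R : realType) (n : nat) (A : 'M[R]_n) : Prop :=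
  forall i j : 'I_n, exists k : nat, 0 < (A ^+ k) i j.

Definition symm_path (R : realType) (n : nat) (A : 'M[R]_n) (t : R) : 'M[R]_n :=
  (1 - t) *: A + t *: A^T.

Definition concave_on_01 (R : realType) (f : R -> R) : Prop :=
  forall x y a : R, 0 < x < 1 -> 0 < y < 1 -> 0 <= a <= 1 ->
    (1 - a) * f x + a * f y <= f ((1 - a) * x + a * y).

(* Main.v *)
Require Import Defs.
From HB Require Import structures.
From mathcomp Require Import all_boot all_order all_algebra.
From mathcomp Require Import all_classical all_reals all_analysis.
From mathcomp Require Import complex.
From mathcomp Require Import ring lra.
Set Implicit Arguments. Unset Strict Implicit. Unset Printing Implicit Defensive.
Import Order.TTheory GRing.Theory Num.Theory.
Local Open Scope ring_scope.
Local Open Scope classical_set_scope.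

Section S.
Variable R : realType.

Lemma char_poly_block n1 n2 (B1 : 'M[R]_n1) (B2 : 'M[R]_n2) :
  char_poly (block_mx B1 0 0 B2) = char_poly B1 * char_poly B2.
Proof. by rewrite /char_poly char_block_diag_mx det_ublock. Qed.

Lemma symm_path_block n1 n2 (B1 : 'M[R]_n1) (B2 : 'M[R]_n2) t :
  symm_path (block_mx B1 0 0 B2) t = block_mx (symm_path B1 t) 0 0 (symm_path B2 t).
Proof.
by rewrite /symm_path tr_block_mx !trmx0 !scale_block_mx !scaler0 add_block_mx !addr0.
Qed.

Lemma normc_ge0 (z : R[i]) : 0 <= Normc.normc z.
Proof. by case: z => a b; exact: sqrtr_ge0. Qed.

Definition rset n (M : 'M[R]_n) :=
  [set Normc.normc z | z in
        [set z : R[i] | root (map_poly (real_complex R) (char_poly M)) z]].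

Lemma rset_ub n (M : 'M[R]_n) : has_ubound (rset M).
Proof.
set p := map_poly (real_complex R) (char_poly M).
have [rs prs] := closed_field_poly_normal p.
exists (\sum_(w <- rs) Normc.normc w) => _ [z /= rz <-].
have : z \in rs.
  move: rz; rewrite /p; rewrite -/p prs /root hornerZ horner_prod mulf_eq0 => /orP[|].
    by rewrite lead_coef_eq0 map_poly_eq0 -size_poly_eq0 size_char_poly.
  by rewrite prodf_seq_eq0 => /hasP[w wrs]; rewrite hornerXsubC subr_eq0 => /eqP ->.
elim: rs {prs} => // w rs IH; rewrite in_cons big_cons => /orP[/eqP ->|/IH].
  by rewrite lerDl sumr_ge0 // => *; exact: normc_ge0.
move=> h; apply: (le_trans h); rewrite lerDr; exact: normc_ge0.
Qed.

Lemma sr_mem n (M : 'M[R]_n) x : rset M x -> x <= spectral_radius M.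
Proof. exact: (ub_le_sup (rset_ub M)). Qed.

Lemma sr_ge0 n (M : 'M[R]_n) : 0 <= spectral_radius M.
Proof.
have [[x Hx]|H] := pselect (exists x, rset M x).
  apply: le_trans (sr_mem Hx); case: Hx => z _ <-; exact: normc_ge0.
rewrite /spectral_radius -/(rset M) (_ : rset M = set0) ?sup0 //.
by apply/seteqP; split => y // Hy; exfalso; apply: H; exists y.
Qed.

Lemma sr_le n (M : 'M[R]_n) b : (forall x, rset M x -> x <= b) -> 0 <= b ->
  spectral_radius M <= b.
Proof.
move=> Hb b0.
have [[x Hx]|H] := pselect (exists x, rset M x).
  by apply: ge_sup => //; exists x.
rewrite /spectral_radius -/(rset M) (_ : rset M = set0) ?sup0 //.
by apply/seteqP; split => y // Hy; exfalso; apply: H; exists y.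
Qed.

Lemma rset_block n1 n2 (B1 : 'M[R]_n1) (B2 : 'M[R]_n2) x :
  rset (block_mx B1 0 0 B2) x <-> rset B1 x \/ rset B2 x.
Proof.
rewrite /rset char_poly_block rmorphM /=; split.
  by case=> z /=; rewrite rootM => /orP[] H <-; [left|right]; exists z.
by case=> -[z /= H <-]; exists z => //=; rewrite rootM H ?orbT.
Qed.

Lemma sr_block n1 n2 (B1 : 'M[R]_n1) (B2 : 'M[R]_n2) :
  spectral_radius (block_mx B1 0 0 B2) = Num.max (spectral_radius B1) (spectral_radius B2).
Proof.
apply/eqP; rewrite eq_le; apply/andP; split.
  apply: sr_le; last by rewrite le_max sr_ge0.
  move=> x /rset_block [] /sr_mem H; rewrite le_max H ?orbT //.
rewrite ge_max; apply/andP; split; apply: sr_le (sr_ge0 _) => x H;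
  apply: sr_mem; apply/rset_block; by [left|right].
Qed.

Lemma deriv_eps (g : R -> R) (t e : R) : derivable g t 1 -> 0 < e ->
  exists2 d, 0 < d & forall h, h != 0 -> `|h| < d ->
    `|derive1 g t - h^-1 * (g (h + t) - g t)| < e.
Proof.
move=> dg e0.
move: (dg); rewrite /derivable => /cvgrPdist_lt /(_ e e0) H.
case: H => d /= d0 Hd.
exists d => // h h0 hd.
have := Hd h; rewrite /ball_ /= sub0r normrN => /(_ hd h0).
move=> H; rewrite derive1E; move: H.
change (h%:A) with (h * 1).
by rewrite mulr1.
Qed.


Lemma key (f g1 g2 : R -> R) (t : R) : 0 < t < 1 -> concave_on_01 f ->
  (forall s, g1 s <= f s) -> (forall s, g2 s <= f s) ->
  f t = g1 t -> g1 t = g2 t -> derivable g1 t 1 -> derivable g2 t 1 ->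
  derive1 g2 t <= derive1 g1 t.
Proof.
move=> /andP[t0 t1] conc Hg1 Hg2 ft g12 dg1 dg2.
rewrite leNgt; apply/negP => lt12.
set d1 := derive1 g1 t in lt12 *; set d2 := derive1 g2 t in lt12 *.
have e0 : 0 < (d2 - d1) / 2 by apply: divr_gt0; rewrite ?subr_gt0.
have [r1 r10 H1] := deriv_eps dg1 e0.
have [r2 r20 H2] := deriv_eps dg2 e0.
set h := Num.min (Num.min r1 r2) (Num.min t (1 - t)) / 2.
have m0 : 0 < Num.min (Num.min r1 r2) (Num.min t (1 - t)).
  by rewrite !lt_min r10 r20 t0 subr_gt0 t1.
have h0 : 0 < h by apply: divr_gt0.
have hm : h < Num.min (Num.min r1 r2) (Num.min t (1 - t)).
  rewrite /h ltr_pdivrMr // mulr_natr mulr2n ltrDr //.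
move: hm; rewrite !lt_min => /andP[/andP[hr1 hr2] /andP[ht h1t]].
have := H2 h (lt0r_neq0 h0); rewrite gtr0_norm // => /(_ hr2).
have := H1 (- h); rewrite oppr_eq0 (lt0r_neq0 h0) normrN gtr0_norm // => /(_ isT hr1).
set a := h^-1 * _; set b := (- h)^-1 * _.
have ha : h * a = g2 (h + t) - g2 t by rewrite /a mulrA mulfV ?mul1r // lt0r_neq0.
have hb : - h * b = g1 (- h + t) - g1 t.
  by rewrite /b mulrA mulfV ?mul1r // oppr_eq0 lt0r_neq0.
have cc := conc (t - h) (t + h) (2^-1).
have := cc; rewrite (_ : (1 - 2^-1) * (t - h) + 2^-1 * (t + h) = t); last by field.
move=> {}cc.
have x1 : 0 < t - h < 1 by apply/andP; split; lra.
have x2 : 0 < t + h < 1 by apply/andP; split; lra.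
have x3 : (0 <= 2^-1 :> R) && (2^-1 <= 1 :> R) by apply/andP; split; lra.
have {}cc := cc x1 x2 x3.
have q1 := Hg1 (t - h); have q2 := Hg2 (t + h).
have hab : h * (a - b) <= 0.
  have hb' : h * b = g1 t - g1 (- h + t) by rewrite -[h * b]opprK -mulNr hb opprB.
  rewrite mulrBr ha hb' (addrC h t) (addrC (- h) t).
  move: cc q1 q2; rewrite ft -g12; lra.
have ab : a - b <= 0 by rewrite -(pmulr_rle0 _ h0).
rewrite !ltr_norml => /andP[u1 u2] /andP[v1 v2].
move: lt12 u1 u2 v1 v2 ab; rewrite /d1 /d2; lra.
Qed.
End S.

Theorem proposition1 (R : realType) (n1 n2 : nat)
    (A1 : 'M[R]_n1) (A2 : 'M[R]_n2) (tstar : R) :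
  (0 < n1)%N -> (0 < n2)%N ->
  nonneg_mx A1 -> irreducible_mx A1 ->
  nonneg_mx A2 -> irreducible_mx A2 ->
  0 < tstar < 1 ->
  let A := block_mx A1 0 0 A2 in
  let r := fun t => spectral_radius (symm_path A t) in
  let r1 := fun t => spectral_radius (symm_path A1 t) in
  let r2 := fun t => spectral_radius (symm_path A2 t) in
  r1 tstar = r2 tstar ->
  derivable r1 tstar 1 -> derivable r2 tstar 1 ->
  derive1 r1 tstar != derive1 r2 tstar ->
  ~ concave_on_01 r.
Proof.
move=> _ _ _ _ _ _ tst A r r1 r2 e12 dr1 dr2 dne conc.
have rE s : r s = Num.max (r1 s) (r2 s).
  by rewrite /r /A symm_path_block sr_block.
have rg1 s : r1 s <= r s by rewrite rE le_max lexx.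
have rg2 s : r2 s <= r s by rewrite rE le_max lexx orbT.
have rt1 : r tstar = r1 tstar by rewrite rE e12 maxxx.
have rt2 : r tstar = r2 tstar by rewrite rE e12 maxxx.
have h1 := key tst conc rg1 rg2 rt1 e12 dr1 dr2.
have h2 := key tst conc rg2 rg1 rt2 (esym e12) dr2 dr1.
by move/negP: dne; apply; rewrite eq_le h1 h2.
Qed.
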